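(* Let $T$ be a regular, $T_{\mathrm{bin}}$-free binary tree. Then there exists a constant $C\in\mathbb N$ such that every anti-chain $A\subseteq T$ (with respect to the prefix order) contains at most $C$ elements $u$ with $\mathrm{CB}_*(T\restriction u)=\mathrm{CB}_*(T)$.
   Context: A binary tree is a prefix-closed subset $T\subseteq\{0,1\}^*$; it is regular if it is a regular language over $\{0,1\}$. For $u\in T$, $T\restriction u=\{v\in\{0,1\}^*:uv\in T\}$. $T_{\mathrm{bin}}=\{0,1\}^*$ ordered by the prefix relation $\preceq$; $T$ is $T_{\mathrm{bin}}$-free if there is no injection $f:\{0,1\}^*\to T$ with $u\preceq v\iff f(u)\preceq f(v)$. An infinite branch of $T$ is an infinite prefix-closed subset of $T$ linearly ordered by $\preceq$. The derivative $d(T)$ is the set of $u\in T$ contained in at least two distinct infinite branches of $T$; $d^{(0)}(T)=T$, $d^{(n)}(T)=d(d^{(n-1)}(T))$. For regular $T_{\mathrm{bin}}$-free $T$ some $d^{(n)}(T)$ is finite, and $\mathrm{CB}_*(T)$ is the least $n\in\mathbb N$ such that $d^{(n)}(T)$ is finite. An anti-chain is a set of pairwise $\preceq$-incomparable elements. *)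

(* Defs.v *)
(* Words over {0,1} are [seq bool] (false = 0, true = 1).
   Sets of words (trees, branches, anti-chains) are Prop-valued predicates. *)
From mathcomp Require Import all_boot.
Unset Printing Implicit Defensive.

Definition word := seq bool.
Definition wset := word -> Prop.

Definition preceq (u v : word) : bool := prefix u v.

Definition is_tree (T : wset) : Prop := forall u v : word, T (u ++ v) -> T u.

Record dfa := DFA {
  dfa_state : finType;
  dfa_start : dfa_state;
  dfa_delta : dfa_state -> bool -> dfa_state;
  dfa_final : pred dfa_state }.

Definition dfa_accept (M : dfa) (w : word) : bool :=
  dfa_final M (foldl (dfa_delta M) (dfa_start M) w).

Definition regular (L : wset) : Prop :=
  exists M : dfa, forall w, L w <-> dfa_accept M w.

(* T_bin-free: no prefix-order embedding of {0,1}^* into T *)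
Definition Tbin_free (T : wset) : Prop :=
  ~ exists f : word -> word,
      injective f /\ (forall u, T (f u)) /\
      (forall u v, preceq u v <-> preceq (f u) (f v)).

Definition wfinite (S : wset) : Prop := exists s : seq word, forall x, S x -> x \in s.

Definition inf_branch (T B : wset) : Prop :=
  (forall x, B x -> T x) /\
  (forall u v, B (u ++ v) -> B u) /\
  (forall u v, B u -> B v -> preceq u v || preceq v u) /\
  ~ wfinite B.

Definition deriv (T : wset) : wset := fun u =>
  T u /\ exists B1 B2, inf_branch T B1 /\ inf_branch T B2 /\
          ~ (forall x, B1 x <-> B2 x) /\ B1 u /\ B2 u.

Definition iter_deriv (n : nat) (T : wset) : wset := iter n deriv T.

Definition is_CB (T : wset) (n : nat) : Prop :=
  wfinite (iter_deriv n T) /\ forall m, m < n -> ~ wfinite (iter_deriv m T).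

Definition restr (T : wset) (u : word) : wset := fun v => T (u ++ v).

Definition antichain (A : wset) : Prop :=
  forall u v, A u -> A v -> u <> v -> ~~ preceq u v.

(* Main.v *)
Require Import Defs.
From mathcomp Require Import all_boot.
From Stdlib Require Import Classical ClassicalEpsilon.

Lemma prefix_comp (x y w : word) : prefix x w -> prefix y w -> prefix x y || prefix y x.
Proof.
move=> /prefixP[a ->] /prefixP[b].
elim: x y a => [|c x IH] [|d y] a //= E.
by case: E => -> /IH; rewrite eqxx.
Qed.

Lemma prefix_cat2 (u x y : word) : prefix (u ++ x) (u ++ y) = prefix x y.
Proof. by rewrite prefix_catr // eqxx. Qed.

Lemma tree_deriv S : is_tree (deriv S).
Proof.
move=> u v [_ [B1 [B2 [h1 [h2 [hn [b1 b2]]]]]]].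
have bb1 := h1.2.1 _ _ b1. have bb2 := h2.2.1 _ _ b2.
split; first exact: h1.1 _ bb1.
by exists B1, B2.
Qed.

Lemma tree_iter m T : is_tree T -> is_tree (iter_deriv m T).
Proof. by case: m => [|m] //= _; apply: tree_deriv. Qed.

Lemma inf_branch_mono S S' B : (forall x, S x -> S' x) -> inf_branch S B -> inf_branch S' B.
Proof. by move=> H [a [b [c d]]]; split => // x /a /H. Qed.

Lemma deriv_mono S S' : (forall x, S x -> S' x) -> forall x, deriv S x -> deriv S' x.
Proof.
move=> H x [Sx [B1 [B2 [h1 [h2 r]]]]]; split; first exact: H.
by exists B1, B2; split; [|split] => //; apply: inf_branch_mono H _.
Qed.
Arguments prefix_comp {x y w}.

Definition liftB (u : word) (B : wset) : wset :=
  fun x => prefix x u \/ exists y, B y /\ x = u ++ y.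

Lemma cat_cancel (u x y : word) : u ++ x = u ++ y -> x = y.
Proof. by move=> /(congr1 (drop (size u))); rewrite !drop_size_cat. Qed.

Lemma liftB_cat u B x : B [::] -> liftB u B (u ++ x) -> B x.
Proof.
move=> B0 [|[y [By /cat_cancel ->]]] //.
by rewrite -{2}(cats0 u) prefix_cat2 prefixs0 => /eqP ->.
Qed.

Lemma lift_branch S u B v : is_tree S -> inf_branch (restr S u) B -> B v ->
  inf_branch S (liftB u B).
Proof.
move=> hS [hsub [hpc [hlin hinf]]] Bv.
have Su : S u by apply: (hS u v); apply: hsub.
split; [|split; [|split]].
- move=> x [/prefixP [z E]|[y [By ->]]]; last exact: hsub.
  by apply: (hS x z); rewrite -E.
- move=> x y [H|[z [Bz E]]]; first by left; apply: catl_prefix H.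
  have px : prefix x (u ++ z) by rewrite -E prefix_prefix.
  have := prefix_comp px (prefix_prefix u z); case/orP => H; first by left.
  move: H => /prefixP [w Ex]; right; exists w; split => //.
  apply: (hpc w y); suff -> : w ++ y = z by [].
  by apply: (@cat_cancel u); rewrite catA -Ex E.
- rewrite /preceq; move=> x y [Hx|[z1 [B1 ->]]] [Hy|[z2 [B2 ->]]].
  + exact: prefix_comp Hx Hy.
  + by rewrite (prefix_catl _ Hx).
  + by rewrite (prefix_catl _ Hy) orbT.
  + by rewrite !prefix_cat2; apply: hlin.
- move=> [l Hl]; apply: hinf; exists (map (drop (size u)) l) => y By.
  apply/mapP; exists (u ++ y); last by rewrite drop_size_cat.
  by apply: Hl; right; exists y.
Qed.

Lemma deriv_restr S u v : is_tree S -> deriv (restr S u) v -> deriv S (u ++ v).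
Proof.
move=> hS [Sv [B1 [B2 [h1 [h2 [hne [b1 b2]]]]]]].
split => //.
exists (liftB u B1), (liftB u B2).
split; first exact: lift_branch h1 b1.
split; first exact: lift_branch h2 b2.
have B10 : B1 [::] by apply: (h1.2.1 [::] v).
have B20 : B2 [::] by apply: (h2.2.1 [::] v).
split; last by split; right; [exists v| exists v].
move=> H; apply: hne => x; split => Bx.
- apply: liftB_cat => //; apply/H; right; by exists x.
- apply: liftB_cat => //; apply/H; right; by exists x.
Qed.

Lemma iter_restr m T u x : is_tree T ->
  iter_deriv m (restr T u) x -> iter_deriv m T (u ++ x).
Proof.
move=> hT; elim: m x => [|m IH] x // H.
change (deriv (iter_deriv m T) (u ++ x)).
apply: (deriv_restr _ _ _ (tree_iter m T hT)).
change (deriv (iter_deriv m (restr T u)) x) in H.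
exact: (deriv_mono _ _ IH _ H).
Qed.

Section K.
Variable D : wset.
Hypothesis hD : is_tree D.

Definition good (w : word) := ~ wfinite (restr D w).

Lemma good_step w : good w -> good (w ++ [:: false]) \/ good (w ++ [:: true]).
Proof.
move=> g; apply: NNPP => H; apply: g.
have [l0 H0] : wfinite (restr D (w ++ [:: false])).
  by apply: NNPP => K; apply: H; left.
have [l1 H1] : wfinite (restr D (w ++ [:: true])).
  by apply: NNPP => K; apply: H; right.
exists ([:: [::]] ++ map (cons false) l0 ++ map (cons true) l1) => x.
case: x => [|[] x] Dx; rewrite !mem_cat ?inE //.
- apply/orP; right; apply/orP; right; apply/mapP; exists x => //; apply: H1.
  by rewrite /restr -catA.
- apply/orP; right; apply/orP; left; apply/mapP; exists x => //; apply: H0.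
  by rewrite /restr -catA.
Qed.

Definition step (w : word) : word :=
  if excluded_middle_informative (good (w ++ [:: false])) then w ++ [:: false]
  else w ++ [:: true].

Lemma good_stepP w : good w -> good (step w).
Proof.
move=> g; rewrite /step; case: excluded_middle_informative => // H.
by case: (good_step _ g).
Qed.

Lemma step_ext w : exists b, step w = w ++ [:: b].
Proof. by rewrite /step; case: excluded_middle_informative; eexists. Qed.

Definition kb (u : word) (k : nat) : word := iter k step u.

Lemma kb_good u k : good u -> good (kb u k).
Proof. by move=> g; elim: k => //= k IH; apply: good_stepP. Qed.

Lemma kb_size u k : size (kb u k) = size u + k.
Proof.
elim: k => [|k IH]; first by rewrite addn0.
rewrite /kb iterS -/(kb u k); have [b ->] := step_ext (kb u k).
by rewrite size_cat IH addnS addn1.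
Qed.

Lemma kb_prefix u i j : prefix (kb u i) (kb u (i + j)).
Proof.
elim: j => [|j IH]; first by rewrite addn0 prefix_refl.
rewrite addnS /kb iterS -/(kb u (i + j)); have [b ->] := step_ext (kb u (i + j)).
exact: prefix_catl.
Qed.

Lemma good_D w : good w -> D w.
Proof.
move=> g; apply: NNPP => nD; apply: g; exists [::] => v Dv.
by exfalso; apply: nD; apply: (hD w v).
Qed.

Definition KB (u : word) : wset := fun x => exists k, prefix x (kb u k).

Lemma size_sumn (l : seq word) x : x \in l -> size x <= sumn (map size l).
Proof.
elim: l => [|y l IH] //=; rewrite inE => /orP [/eqP ->|/IH H].
  exact: leq_addr.
exact: leq_trans H (leq_addl _ _).
Qed.

Lemma KB_branch u : good u -> inf_branch D (KB u).
Proof.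
move=> g; split; [|split; [|split]].
- move=> x [k /prefixP [z E]]; apply: (hD x z); rewrite -E.
  exact: good_D _ (kb_good _ k g).
- move=> x y [k H]; exists k; exact: catl_prefix H.
- move=> x y [i Hx] [j Hy]; rewrite /preceq.
  apply: (@prefix_comp _ _ (kb u (i + j))).
    exact: prefix_trans Hx (kb_prefix _ _ _).
  apply: prefix_trans Hy _; rewrite addnC; exact: kb_prefix.
- move=> [l Hl].
  have /size_sumn : kb u (sumn (map size l)).+1 \in l.
    by apply: Hl; exists (sumn (map size l)).+1; apply: prefix_refl.
  rewrite kb_size => H; have := leq_trans (leq_addl (size u) _) H; by rewrite ltnn.
Qed.

Lemma KB_u u : KB u u.
Proof. by exists 0; apply: prefix_refl. Qed.

End K.

Fixpoint allw n : seq word :=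
  if n is n'.+1 then map (cons false) (allw n') ++ map (cons true) (allw n')
  else [:: [::]].

Lemma allw_mem w : w \in allw (size w).
Proof.
elim: w => [|[] w IH] //=; rewrite mem_cat; apply/orP; [right|left];
  by apply/mapP; exists w.
Qed.

Theorem lemma5p6 (T : wset) (hT : is_tree T) (hreg : regular T)
    (hfree : Tbin_free T) :
  exists C : nat, forall A : wset,
    antichain A -> (forall u, A u -> T u) ->
    forall s : seq word, uniq s ->
      (forall u, u \in s ->
         A u /\ exists n, is_CB T n /\ is_CB (restr T u) n) ->
      size s <= C.
Proof.
case: (classic (exists n, is_CB T n)) => [[n0 Hn0]|Hno]; last first.
  exists 0 => A _ _ [|u s] // _ H; exfalso; apply: Hno.
  by have [_ [n [h _]]] := H u (mem_head _ _); exists n.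
have uniqCB : forall n, is_CB T n -> n = n0.
  move=> n [f1 m1]; case: Hn0 => f0 m0.
  by case: (ltngtP n n0) => // h; [case: (m0 _ h) | case: (m1 _ h)].
case: n0 Hn0 uniqCB => [|m] Hn0 uniqCB.
- case: Hn0 => [[W HW] _]; exists (size W) => A hA hAT s us Hs.
  apply: uniq_leq_size => // u /Hs [Au _]; apply: HW; exact: hAT.
- pose D := iter_deriv m T.
  have hD : is_tree D := tree_iter m T hT.
  case: Hn0 => [[W0 HW0] _].
  pose L := (sumn (map size W0)).+1.
  exists (size (allw L)) => A hA hAT s us Hs.
  have good_s : forall u, u \in s -> good D u.
    move=> u /Hs [_ [n [hn hnu]]]; rewrite (uniqCB n hn) in hnu.
    case: hnu => _ /(_ m (ltnSn m)) nf [l Hl]; apply: nf.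
    exists l => x Hx; apply: Hl; rewrite /restr; exact: iter_restr.
  pose p u := take L (kb D u L).
  have sizep : forall u, size (p u) = L.
    by move=> u; rewrite size_takel // kb_size leq_addl.
  have inB : forall u, KB D u (p u).
    move=> u; exists L; rewrite /p -{2}(cat_take_drop L (kb D u L)).
    exact: prefix_prefix.
  rewrite -(size_map p); apply: uniq_leq_size.
  - rewrite (map_inj_in_uniq _) // => u v su sv E.
    apply: NNPP => nuv.
    have Bu := KB_branch D hD u (good_s u su).
    have Bv := KB_branch D hD v (good_s v sv).
    have [Au _] := Hs u su. have [Av _] := Hs v sv.
    have dw : deriv D (p u).
      split; first exact: Bu.1 _ (inB u).
      exists (KB D u), (KB D v); split; [|split; [|split]] => //.
      + move=> H; have Kvu : KB D v u by apply/H; apply: KB_u.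
        have := Bv.2.2.1 _ _ Kvu (KB_u D v).
        have h1 := hA u v Au Av nuv.
        have h2 := hA v u Av Au (fun e => nuv (esym e)).
        by move: h1 h2 => /negbTE -> /negbTE ->.
      + by split => //; rewrite E.
    have := size_sumn _ _ (HW0 _ dw); rewrite sizep /L ltnn //.
  - move=> w /mapP [u _ ->]; rewrite -(sizep u); apply: allw_mem.
Qed.
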